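(* Let $G$ be a group with a finite generating set $S$ not containing the identity, and let $d_W$ and $d_C$ be the word metric and the cardinal metric on $G$ with respect to $S$. (1) If $(G,d_W)$ has infinite diameter, then $(G,d_W)$ and $(G,d_C)$ are not bi-Lipschitz equivalent. (2) If $(G,d_W)$ has finite diameter, then $(G,d_W)$ and $(G,d_C)$ are bi-Lipschitz equivalent, and therefore they are quasi-isometric.
   Context: The word metric: $d_W(g,g)=0$ and for $g\ne h$, $d_W(g,h)$ is the least $n\in\mathbb{N}$ such that $g^{-1}h=s_1^{\epsilon_1}\cdots s_n^{\epsilon_n}$ with $s_i\in S$, $\epsilon_i\in\{\pm1\}$. The cardinal norm is $\|g\| = \min\{|A| : A\subseteq S,\ g\in\langle A\rangle\}$, where $\langle A\rangle$ is the subgroup generated by $A$, and $d_C(g,h)=\|g^{-1}h\|$. *)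

(* Defs.v *)
From Stdlib Require Import Reals List ClassicalEpsilon.
Open Scope R_scope.

Definition is_group (G : Type) (mul : G -> G -> G) (inv : G -> G) (e : G) : Prop :=
  (forall x y z, mul x (mul y z) = mul (mul x y) z) /\
  (forall x, mul e x = x) /\ (forall x, mul x e = x) /\
  (forall x, mul (inv x) x = e) /\ (forall x, mul x (inv x) = e).

(* a word: list of (letter, sign); true = s, false = s^{-1} *)
Definition eval_word {G : Type} (mul : G -> G -> G) (inv : G -> G) (e : G)
  (w : list (G * bool)) : G :=
  fold_right (fun (p : G * bool) (acc : G) => mul (if snd p then fst p else inv (fst p)) acc) e w.

Definition word_over {G : Type} (A : list G) (w : list (G * bool)) : Prop :=
  forall p, In p w -> In (fst p) A.

Definition in_gen {G : Type} (mul : G -> G -> G) (inv : G -> G) (e : G)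
  (A : list G) (g : G) : Prop :=
  exists w, word_over A w /\ eval_word mul inv e w = g.

Definition generates {G : Type} (mul : G -> G -> G) (inv : G -> G) (e : G)
  (S : list G) : Prop := forall g, in_gen mul inv e S g.

(* least natural number satisfying P (0 if none exists) *)
Definition least (P : nat -> Prop) (n : nat) : Prop :=
  P n /\ forall m, P m -> (n <= m)%nat.
Definition minnat (P : nat -> Prop) : nat :=
  epsilon (inhabits 0%nat) (least P).

Definition dW {G : Type} (mul : G -> G -> G) (inv : G -> G) (e : G)
  (S : list G) (g h : G) : nat :=
  minnat (fun n => exists w, word_over S w /\ length w = n /\
                     eval_word mul inv e w = mul (inv g) h).

Definition cnorm {G : Type} (mul : G -> G -> G) (inv : G -> G) (e : G)
  (S : list G) (g : G) : nat :=
  minnat (fun n => exists A, NoDup A /\ incl A S /\ length A = n /\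
                     in_gen mul inv e A g).

Definition dC {G : Type} (mul : G -> G -> G) (inv : G -> G) (e : G)
  (S : list G) (g h : G) : nat := cnorm mul inv e S (mul (inv g) h).

Definition infinite_diameter {X : Type} (d : X -> X -> nat) : Prop :=
  forall n : nat, exists x y, (n < d x y)%nat.

Definition finite_diameter {X : Type} (d : X -> X -> nat) : Prop :=
  exists n : nat, forall x y, (d x y <= n)%nat.

Definition bijective {X Y : Type} (f : X -> Y) : Prop :=
  exists g : Y -> X, (forall x, g (f x) = x) /\ (forall y, f (g y) = y).

Definition bilipschitz_equiv {X Y : Type} (d1 : X -> X -> nat) (d2 : Y -> Y -> nat) : Prop :=
  exists (f : X -> Y) (K : R), bijective f /\ 1 <= K /\
    forall x y, / K * INR (d1 x y) <= INR (d2 (f x) (f y)) /\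
                INR (d2 (f x) (f y)) <= K * INR (d1 x y).

Definition quasi_isometric {X Y : Type} (d1 : X -> X -> nat) (d2 : Y -> Y -> nat) : Prop :=
  exists (f : X -> Y) (K C : R), 1 <= K /\ 0 <= C /\
    (forall x y, / K * INR (d1 x y) - C <= INR (d2 (f x) (f y)) /\
                 INR (d2 (f x) (f y)) <= K * INR (d1 x y) + C) /\
    (forall y, exists x, INR (d2 (f x) y) <= C).

(* Main.v *)
Require Import Defs.
From Stdlib Require Import Reals List.
From Stdlib Require Import Lia Lra Classical ClassicalEpsilon Arith Wf_nat.

Lemma least_exists (P : nat -> Prop) : (exists n, P n) -> exists m, least P m.
Proof.
  intros [n Hn]. revert Hn. induction n as [n IH] using lt_wf_ind. intros Hn.
  destruct (classic (exists k, (k < n)%nat /\ P k)) as [[k [Hk Pk]]|Hno].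
  - exact (IH k Hk Pk).
  - exists n. split; [exact Hn|]. intros m Pm.
    destruct (Nat.lt_ge_cases m n) as [Hlt|Hge]; [|exact Hge].
    exfalso. apply Hno. eauto.
Qed.

Lemma minnat_spec (P : nat -> Prop) : (exists n, P n) -> least P (minnat P).
Proof.
  intros H. unfold minnat. apply epsilon_spec. now apply least_exists.
Qed.

Lemma nodup_ex {G : Type} (l : list G) :
  exists B, NoDup B /\ incl B l /\ incl l B /\ (length B <= length l)%nat.
Proof.
  induction l as [|a l IH].
  - exists nil. repeat split; try constructor; intros x Hx; inversion Hx.
  - destruct IH as [B [HB1 [HB2 [HB3 HB4]]]].
    destruct (classic (In a B)) as [Hin|Hin].
    + exists B. repeat split; auto.
      * intros x Hx. right. auto.
      * intros x [<-|Hx]; auto.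
      * simpl; lia.
    + exists (a :: B). repeat split.
      * constructor; auto.
      * intros x [<-|Hx]; [left; auto|right; auto].
      * intros x [<-|Hx]; [left; auto|right; auto].
      * simpl; lia.
Qed.

Section S.
Variables (G : Type) (mul : G -> G -> G) (inv : G -> G) (e : G) (S : list G).
Hypothesis Hgen : generates mul inv e S.

Lemma dW_spec g h : least (fun n => exists w, word_over S w /\ length w = n /\
                     eval_word mul inv e w = mul (inv g) h) (dW mul inv e S g h).
Proof.
  apply minnat_spec. destruct (Hgen (mul (inv g) h)) as [w [H1 H2]]. eauto.
Qed.

Lemma cnorm_spec g : least (fun n => exists A, NoDup A /\ incl A S /\ length A = n /\
                     in_gen mul inv e A g) (cnorm mul inv e S g).
Proof.
  apply minnat_spec. destruct (nodup_ex S) as [B [H1 [H2 [H3 H4]]]].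
  destruct (Hgen g) as [w [Hw1 Hw2]].
  exists (length B), B. repeat split; auto. exists w. split; auto.
  intros p Hp. apply H3. auto.
Qed.

Lemma cnorm_le_S g : (cnorm mul inv e S g <= length S)%nat.
Proof.
  destruct (cnorm_spec g) as [_ Hm]. destruct (nodup_ex S) as [B [H1 [H2 [H3 H4]]]].
  destruct (Hgen g) as [w [Hw1 Hw2]].
  eapply Nat.le_trans; [apply Hm|exact H4].
  exists B. repeat split; auto. exists w. split; auto.
  intros p Hp. apply H3. auto.
Qed.

Lemma dC_le_dW g h : (dC mul inv e S g h <= dW mul inv e S g h)%nat.
Proof.
  destruct (dW_spec g h) as [[w [Hw1 [Hw2 Hw3]]] _].
  destruct (cnorm_spec (mul (inv g) h)) as [_ Hm].
  destruct (nodup_ex (map fst w)) as [B [H1 [H2 [H3 H4]]]].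
  unfold dC. eapply Nat.le_trans; [apply Hm|].
  - exists B. repeat split; auto.
    + intros x Hx. apply H2 in Hx. apply in_map_iff in Hx.
      destruct Hx as [p [<- Hp]]. apply Hw1; auto.
    + exists w. split; auto. intros p Hp. apply H3. apply in_map. auto.
  - rewrite length_map in H4. lia.
Qed.

Lemma cnorm0 g : cnorm mul inv e S g = 0%nat -> g = e.
Proof.
  intros H. destruct (cnorm_spec g) as [[A [_ [_ [HA [w [Hw1 Hw2]]]]]] _].
  rewrite H in HA. destruct A; [|discriminate].
  destruct w as [|p w]; [exact (eq_sym Hw2)|].
  exfalso. apply (Hw1 p). left; auto.
Qed.

Lemma cnorm_e : cnorm mul inv e S e = 0%nat.
Proof.
  destruct (cnorm_spec e) as [_ Hm].
  assert (H := Hm 0%nat). assert (cnorm mul inv e S e <= 0)%nat; [|lia].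
  apply H. exists nil. repeat split; try constructor.
  - intros x Hx; inversion Hx.
  - exists nil. split; auto. intros p Hp; inversion Hp.
Qed.

Lemma dW_e g h : mul (inv g) h = e -> dW mul inv e S g h = 0%nat.
Proof.
  intros He. destruct (dW_spec g h) as [_ Hm].
  assert (dW mul inv e S g h <= 0)%nat; [|lia].
  apply Hm. exists nil. repeat split; auto. intros p Hp; inversion Hp.
Qed.

End S.

Theorem mainTheorem7 (G : Type) (mul : G -> G -> G) (inv : G -> G) (e : G)
  (S : list G) :
  is_group G mul inv e ->
  generates mul inv e S ->
  ~ In e S ->
  (infinite_diameter (dW mul inv e S) ->
     ~ bilipschitz_equiv (dW mul inv e S) (dC mul inv e S)) /\
  (finite_diameter (dW mul inv e S) ->
     bilipschitz_equiv (dW mul inv e S) (dC mul inv e S) /\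
     quasi_isometric (dW mul inv e S) (dC mul inv e S)).
Proof.
  intros Hg Hgen _. split.
  - intros Hinf [f [K [_ [HK Hb]]]].
    destruct (INR_unbounded (K * INR (length S))) as [n Hn].
    destruct (Hinf n) as [x [y Hxy]].
    destruct (Hb x y) as [H1 _].
    assert (Hc := cnorm_le_S G mul inv e S Hgen (mul (inv (f x)) (f y))).
    apply le_INR in Hc. apply lt_INR in Hxy. unfold dC in H1.
    set (a := INR (dW mul inv e S x y)) in *.
    set (b := INR (cnorm mul inv e S (mul (inv (f x)) (f y)))) in *.
    assert (a <= K * b).
    { replace a with (K * (/ K * a)) by (field; lra).
      apply Rmult_le_compat_l; lra. }
    assert (K * b <= K * INR (length S)) by (apply Rmult_le_compat_l; lra).
    lra.
  - intros [D HD].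
    set (K := Rmax 1 (INR D)).
    assert (HK1 : 1 <= K) by apply Rmax_l.
    assert (HKD : INR D <= K) by apply Rmax_r.
    assert (Hb : forall x y, / K * INR (dW mul inv e S x y) <= INR (dC mul inv e S x y) /\
                   INR (dC mul inv e S x y) <= K * INR (dW mul inv e S x y)).
    { intros x y. assert (Hle := dC_le_dW G mul inv e S Hgen x y).
      apply le_INR in Hle. split.
      - destruct (Nat.eq_dec (dC mul inv e S x y) 0) as [H0|H0].
        + unfold dC in H0. apply cnorm0 in H0; auto.
          rewrite (dW_e G mul inv e S Hgen x y H0). rewrite Rmult_0_r. apply pos_INR.
        + assert (1 <= INR (dC mul inv e S x y)) by (apply (le_INR 1); lia).
          assert (HDx := HD x y). apply le_INR in HDx.
          assert (/ K * INR (dW mul inv e S x y) <= / K * K).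
          { apply Rmult_le_compat_l; [left; apply Rinv_0_lt_compat; lra| lra]. }
          rewrite Rinv_l in H1 by lra. lra.
      - assert (0 <= INR (dW mul inv e S x y)) by apply pos_INR.
        assert (INR (dW mul inv e S x y) <= K * INR (dW mul inv e S x y)).
        { replace (INR (dW mul inv e S x y)) with (1 * INR (dW mul inv e S x y)) at 1 by ring.
          apply Rmult_le_compat_r; lra. }
        lra. }
    split.
    + exists (fun x => x), K. split; [|split; auto].
      exists (fun x => x); split; auto.
    + exists (fun x => x), K, 0. split; [auto|split; [lra|split]].
      * intros x y. destruct (Hb x y). split; lra.
      * intros y. exists y. unfold dC.
        destruct Hg as [_ [_ [_ [Hinv _]]]]. rewrite Hinv, cnorm_e by auto.
        simpl; lra.
Qed.
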